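(* Let $a=\{a_1,\ldots,a_n\}$ be a list of positive integers. For $\epsilon\in\mathbb{R}$ define the quartic form in $x\in\mathbb{R}^n$ $$q^h_{a,\epsilon}(x):=\sum_i x_i^4+\Big(\big(\sum_i a_ix_i\big)^2-2\sum_i x_i^2\Big)\Big(\frac1n\sum_i x_i^2\Big)+(n-\epsilon)\Big(\frac1n\sum_i x_i^2\Big)^2,$$ equivalently $q^h_{a,\epsilon}(x)=p_a\!\left(x/(\frac1n\sum_i x_i^2)^{1/2}\right)(\frac1n\sum_i x_i^2)^2-\epsilon(\frac1n\sum_i x_i^2)^2$ where $p_a(x)=\sum_i(x_i^2-1)^2+(\sum_i a_ix_i)^2$. Then the partition instance $a$ is infeasible if and only if there exists $\epsilon>0$ for which $q^h_{a,\epsilon}(x)\ge 0$ for all $x\in\mathbb{R}^n$.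
   Context: A partition instance $a_1,\ldots,a_n$ (positive integers) is feasible if the index set $\{1,\ldots,n\}$ can be split into two sets $S_1,S_2$ with $\sum_{i\in S_1}a_i=\sum_{i\in S_2}a_i$, and infeasible otherwise. *)

(* Defs.v *)
From mathcomp Require Import all_boot all_order all_algebra.
From mathcomp Require Import reals.
Set Implicit Arguments. Unset Strict Implicit. Unset Printing Implicit Defensive.
Import Order.TTheory GRing.Theory Num.Theory.
Local Open Scope ring_scope.

Definition partition_feasible (n : nat) (a : 'I_n -> nat) : Prop :=
  exists S : {set 'I_n}, (\sum_(i in S) a i = \sum_(i in ~: S) a i)%N.

Definition qh (R : realType) (n : nat) (a : 'I_n -> nat) (eps : R) (x : 'I_n -> R) : R :=
  let m := (n%:R)^-1 * \sum_i x i ^+ 2 in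
  \sum_i x i ^+ 4
  + ((\sum_i (a i)%:R * x i) ^+ 2 - 2 * \sum_i x i ^+ 2) * m
  + (n%:R - eps) * m ^+ 2.

(* Main.v *)
Require Import Defs.
From mathcomp Require Import all_boot all_order all_algebra.
From mathcomp Require Import reals.
From mathcomp Require Import lra ring.
Import Order.TTheory GRing.Theory Num.Theory.
Local Open Scope ring_scope.

Lemma sqn (R : realType) (x : R) : `|x| ^+ 2 = x ^+ 2.
Proof. exact: real_normK (num_real x). Qed.

Lemma sum_sq_dev (R : realType) n (x : 'I_n -> R) (m : R) :
  \sum_i (x i ^+ 2 - m) ^+ 2 =
  \sum_i x i ^+ 4 - 2 * m * \sum_i x i ^+ 2 + n%:R * m ^+ 2.
Proof.
have -> : \sum_i (x i ^+ 2 - m) ^+ 2 =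
          \sum_i (x i ^+ 4 - (2 * m) * x i ^+ 2 + m ^+ 2).
  by apply: eq_bigr => i _; ring.
rewrite big_split /= sumrB -mulr_sumr sumr_const card_ord.
by rewrite [n%:R * _]mulr_natl.
Qed.

Lemma split_sum (R : realType) n (a : 'I_n -> nat) (S : {set 'I_n}) (F : 'I_n -> R) :
  (forall i, i \in S -> F i = 1) -> (forall i, i \notin S -> F i = -1) ->
  \sum_i (a i)%:R * F i =
  (\sum_(i in S) a i)%N%:R - (\sum_(i in ~: S) a i)%N%:R.
Proof.
move=> h1 h2.
rewrite (bigID (fun i => i \in S)) /= !natr_sum -sumrN.
congr (_ + _).
  by apply: eq_bigr => i hi; rewrite h1 // mulr1.
apply: eq_big => [i|i hi]; first by rewrite in_setC.
by rewrite h2 // mulrN1.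
Qed.

Lemma absN_ge1 (R : realType) (u v : nat) : u <> v -> 1 <= `|(u%:R - v%:R : R)|.
Proof.
move=> huv; case: (ltngtP u v) => h.
- have : (u.+1%:R <= v%:R :> R) by rewrite ler_nat.
  rewrite -addn1 natrD => hh.
  rewrite distrC ger0_norm; lra.
- have : (v.+1%:R <= u%:R :> R) by rewrite ler_nat.
  rewrite -addn1 natrD => hh.
  rewrite ger0_norm; lra.
- by [].
Qed.

Lemma key (R : realType) n (a : 'I_n -> nat) (hn : (0 < n)%N)
  (hinf : ~ partition_feasible a) (t : R) (x : 'I_n -> R) :
  0 < t -> (\sum_i (a i)%:R) * t <= 1/2 -> t <= 1/2 -> 0 <= qh a (t ^+ 2) x.
Proof.
move=> ht hAt ht2.
set s := \sum_i x i ^+ 2.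
set m := n%:R^-1 * s.
set L := \sum_i (a i)%:R * x i.
set D := \sum_i (x i ^+ 2 - m) ^+ 2.
have hn0 : n%:R != 0 :> R by rewrite pnatr_eq0 -lt0n.
have hnm : n%:R * m = s by rewrite /m mulrA mulfV ?mul1r.
have hq : qh a (t ^+ 2) x = D + L ^+ 2 * m - t ^+ 2 * m ^+ 2.
  rewrite /qh -/s -/m -/L /D sum_sq_dev -/s -hnm; ring.
rewrite hq.
have hm : 0 <= m by rewrite mulr_ge0 ?invr_ge0 ?ler0n // sumr_ge0 // => i _; exact: sqr_ge0.
have hD : 0 <= D by rewrite sumr_ge0 // => i _; exact: sqr_ge0.
have hLm : 0 <= L ^+ 2 * m by rewrite mulr_ge0 ?sqr_ge0.
case: (boolP [exists i, t * m <= `|x i ^+ 2 - m|]).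
  move/existsP => [i hi].
  have hDi : (x i ^+ 2 - m) ^+ 2 <= D.
    rewrite /D (bigD1 i) //= lerDl sumr_ge0 // => j _; exact: sqr_ge0.
  have := @sqn R (x i ^+ 2 - m).
  have htm : 0 <= t * m by rewrite mulr_ge0 // ltW.
  move=> e; nra.
rewrite negb_exists => /forallP hall.
set r := Num.sqrt m.
have hr0 : 0 <= r by exact: sqrtr_ge0.
have hr2 : r ^+ 2 = m by exact: sqr_sqrtr.
have hy : forall i, `| `|x i| - r| <= t * r.
  move=> i; have := hall i; rewrite -ltNge => hi.
  have hyi : 0 <= `|x i| by [].
  have e1 : x i ^+ 2 - m = (`|x i| - r) * (`|x i| + r).
    rewrite -hr2 -(@sqn R (x i)); ring.
  move: hi; rewrite e1 normrM (ger0_norm (addr_ge0 hyi hr0)) -hr2 => hi.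
  have he : 0 <= `| `|x i| - r| by [].
  nra.
pose sg i : R := if 0 <= x i then 1 else -1.
have hsg : forall i, x i = sg i * `|x i|.
  move=> i; rewrite /sg; case: ifP => h.
    by rewrite mul1r ger0_norm.
  by rewrite ltr0_norm ?mulN1r ?opprK // ltNge h.
set N := \sum_i (a i)%:R * sg i.
have hN : 1 <= `|N|.
  rewrite /N (@split_sum R n a [set i | 0 <= x i]).
  - apply: absN_ge1 => heq; apply: hinf; by exists [set i | 0 <= x i].
  - by move=> i; rewrite inE /sg => ->.
  - by move=> i; rewrite inE /sg => /negbTE ->.
have hLN : L - r * N = \sum_i (a i)%:R * sg i * (`|x i| - r).
  rewrite /L /N mulr_sumr -sumrB; apply: eq_bigr => i _.
  rewrite {1}(hsg i); ring.
have hb : `|L - r * N| <= (\sum_i (a i)%:R) * t * r.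
  rewrite hLN mulr_suml mulr_suml.
  apply: (le_trans (ler_norm_sum _ _ _)); apply: ler_sum => i _.
  have hsg1 : `|sg i| = 1 by rewrite /sg; case: ifP => _; rewrite ?normrN normr1.
  rewrite !normrM hsg1 mulr1 normr_nat -mulrA ler_wpM2l //.
have hA0 : 0 <= \sum_i (a i)%:R :> R by rewrite sumr_ge0.
have hrN : r <= `|r * N|.
  by rewrite normrM (ger0_norm hr0) ler_peMr.
have htri : `|r * N| <= `|L| + `|L - r * N|.
  have e : L - (L - r * N) = r * N by ring.
  by have := ler_normB L (L - r * N); rewrite e.
have hL : r / 2 <= `|L|.
  have : (\sum_i (a i)%:R) * t * r <= r / 2.
    have := ler_wpM2r hr0 hAt; lra.
  lra.
have := @sqn R L.
have hL0 : 0 <= `|L| by [].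
move=> eL.
have hL2 : m / 4 <= L ^+ 2 by rewrite -hr2 -eL; nra.
have h1 : m / 4 * m <= L ^+ 2 * m by rewrite ler_wpM2r.
have ht4 : t ^+ 2 <= 1 / 4 by nra.
have h2 : t ^+ 2 * m ^+ 2 <= 1/4 * m ^+ 2 by rewrite ler_wpM2r ?sqr_ge0.
nra.
Qed.

Theorem theorem5p3 (R : realType) (n : nat) (a : 'I_n -> nat)
    (hn : (0 < n)%N) (ha : forall i, (0 < a i)%N) :
  ~ partition_feasible a <->
  exists eps : R, 0 < eps /\ forall x : 'I_n -> R, 0 <= qh a eps x.
Proof.
split.
  move=> hinf.
  set A := \sum_i (a i)%:R : R.
  have hA : 0 <= A by rewrite sumr_ge0.
  set t := (2 * (A + 1))^-1.
  have hp : 0 < 2 * (A + 1) by lra.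
  have ht : 0 < t by rewrite invr_gt0.
  have htt : t * (2 * (A + 1)) = 1 by rewrite mulVf // gt_eqF.
  exists (t ^+ 2); split; first by rewrite exprn_gt0.
  move=> x; have := @key R n a hn hinf t x ht.
  have hAt : 0 <= A * t by rewrite mulr_ge0 // ltW.
  by apply; rewrite -/A; lra.
move=> [eps [he hq]] [S hS].
pose x i : R := if i \in S then 1 else -1.
have hx2 : forall i, x i ^+ 2 = 1 by move=> i; rewrite /x; case: ifP => _; rewrite ?sqrrN expr1n.
have hx4 : forall i, x i ^+ 4 = 1.
  by move=> i; rewrite (_ : 4 = 2 * 2)%N // exprM hx2 expr1n.
have hn0 : n%:R != 0 :> R by rewrite pnatr_eq0 -lt0n.
have hL : \sum_i (a i)%:R * x i = 0.
  rewrite (@split_sum R n a S) ?hS ?subrr //.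
  - by move=> i; rewrite /x => ->.
  - by move=> i; rewrite /x => /negbTE ->.
have := hq x; rewrite /qh /= hL.
have e2 : \sum_i x i ^+ 2 = n%:R.
  by rewrite (eq_bigr (fun=> 1)) // sumr_const card_ord.
have e4 : \sum_i x i ^+ 4 = n%:R.
  by rewrite (eq_bigr (fun=> 1)) // sumr_const card_ord.
rewrite e2 e4 mulVf // expr1n expr0n /= !mulr1.
lra.
Qed.
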